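(* Let $T>0$, $\xi\in C^{1+\beta}([0,T])$ with $\beta>1/2$, and $f\in C^{1/2}([0,T])$. For $0\le s<t\le T$ let $$K(t,s)=\frac{\xi(t)-\xi(s)}{t-s}\,\frac{e^{-\frac{(\xi(t)-\xi(s))^2}{4(t-s)}}}{(t-s)^{1/2}},$$ and define $g(t)=\int_0^tK(t,s)f(s)\,ds$ for $t\in[0,T]$. Then $g\in C^{1/2}([0,T])$. *)

(* Defs.v *)
From HB Require Import structures.
From mathcomp Require Import all_boot all_order all_algebra.
From mathcomp Require Import all_classical all_reals all_analysis.
Set Implicit Arguments. Unset Strict Implicit. Unset Printing Implicit Defensive.
Import Order.TTheory GRing.Theory Num.Theory.
Import numFieldNormedType.Exports.
Local Open Scope classical_set_scope.
Local Open Scope ring_scope.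

Definition holder_on {R : realType} (a b alpha : R) (f : R -> R) : Prop :=
  exists C : R, forall x y : R, a <= x <= b -> a <= y <= b ->
    `|f x - f y| <= C * (`|x - y| `^ alpha).

Definition C1beta {R : realType} (T beta : R) (xi : R -> R) : Prop :=
  {within `[0, T], continuous xi} /\
  exists dxi : R -> R,
    (forall x : R, 0 < x < T -> is_derive x 1 xi (dxi x)) /\
    holder_on 0 T beta dxi.

(* The kernel K(t,s); at s = t it evaluates to 0 (a null set, irrelevant). *)
Definition kernelK {R : realType} (xi : R -> R) (t s : R) : R :=
  (xi t - xi s) / (t - s) *
  (expR (- ((xi t - xi s) ^+ 2 / (4 * (t - s)))) / Num.sqrt (t - s)).

Definition gfun {R : realType} (xi f : R -> R) (t : R) : R :=
  Rintegral (@lebesgue_measure R) `[0, t] (fun s => kernelK xi t s * f s).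

(* Main.v *)
Require Import Defs.
From HB Require Import structures.
From mathcomp Require Import all_boot all_order all_algebra.
From mathcomp Require Import all_classical all_reals all_analysis.
From mathcomp Require Import ring lra.
From mathcomp Require Import measurable_realfun lebesgue_integral ftc.
Set Implicit Arguments. Unset Strict Implicit. Unset Printing Implicit Defensive.
Import Order.TTheory GRing.Theory Num.Theory.
Import numFieldNormedType.Exports.
Local Open Scope classical_set_scope.
Local Open Scope ring_scope.
Set Implicit Arguments. Unset Strict Implicit. Unset Printing Implicit Defensive.
Import Order.TTheory GRing.Theory Num.Theory.
Import numFieldNormedType.Exports.
Local Open Scope classical_set_scope.
Local Open Scope ring_scope.
Section S.
Context {R : realType}.
Notation mu := (@lebesgue_measure R).

Lemma isd_F (c x : R) : x < c ->
  is_derive x 1 (fun y => - (2 * Num.sqrt (c - y))) (Num.sqrt (c - x))^-1.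
Proof.
move=> xc.
have h1 : is_derive x 1 (fun y : R => c - y) (0 - 1).
  have -> : (fun y : R => c - y) = cst c - id by apply/funext.
  exact: is_deriveB.
have h2 : is_derive x 1 (Num.sqrt \o (fun y : R => c - y)) ((2 * Num.sqrt (c - x))^-1 * (0 - 1)).
  apply: is_derive1_comp => //; apply: is_derive1_sqrt; by rewrite subr_gt0.
have h3 := is_deriveZ (-2) h2.
have -> : (fun y => - (2 * Num.sqrt (c - y))) = (-2) \*: (Num.sqrt \o (fun y : R => c - y)).
  by apply/funext => y /=; rewrite /GRing.scale /= mulNr.
apply: (is_derive_eq h3).
have hs : Num.sqrt (c - x) != 0 by rewrite gt_eqF // sqrtr_gt0 subr_gt0.
rewrite /GRing.scale /=. field. done.
Qed.

Lemma cont_F (c x : R) : {for x, continuous (fun y => - (2 * Num.sqrt (c - y)))}.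
Proof.
apply: continuousN; apply: continuousM; first exact: cst_continuous.
apply: (@continuous_comp _ _ _ (fun y : R => c - y) Num.sqrt).
  by apply: continuousB; [exact: cst_continuous | exact: cvg_id].
exact: sqrt_continuous.
Qed.

Lemma cont_f (c x : R) : x < c -> {for x, continuous (fun y => (Num.sqrt (c - y))^-1)}.
Proof.
move=> xc; apply: continuousV; first by rewrite gt_eqF // sqrtr_gt0 subr_gt0.
apply: (@continuous_comp _ _ _ (fun y : R => c - y) Num.sqrt).
  by apply: continuousB; [exact: cst_continuous | exact: cvg_id].
exact: sqrt_continuous.
Qed.

Lemma int_isqrt (a b c : R) : a < b -> b < c ->
  (\int[mu]_(x in `[a, b]) ((Num.sqrt (c - x))^-1)%:E =
   (2 * Num.sqrt (c - a) - 2 * Num.sqrt (c - b))%:E)%E.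
Proof.
move=> ab bc.
rewrite (@continuous_FTC2 _ _ (fun y => - (2 * Num.sqrt (c - y)))) //.
- by rewrite -EFinB; congr EFin; ring.
- apply: continuous_in_subspaceT => x; rewrite inE /= in_itv /= => /andP[_ xb].
  apply: cont_f; exact: le_lt_trans xb bc.
- split.
  + move=> x; rewrite in_itv /= => /andP[_ xb].
    have := isd_F (lt_trans xb bc); by case.
  + exact/cvg_at_right_filter/cont_F.
  + exact/cvg_at_left_filter/cont_F.
- move=> x; rewrite in_itv /= => /andP[_ xb].
  by rewrite derive1E; apply: derive_val; apply: isd_F; exact: lt_trans xb bc.
Qed.

Lemma meas_oo_cc (a b : R) (g : R -> R) :
  {in `]a, b[, continuous g} -> measurable_fun `[a, b] g.
Proof.
move=> cg.
apply/measurable_fun_itv_bndo_bndcP/measurable_fun_itv_obnd_cbndP.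
apply: open_continuous_measurable_fun; first exact: interval_open.
by move=> x /set_mem xab; apply: cg.
Qed.

Lemma meas_phi (a b : R) : measurable_fun `[a, b] (fun x => (Num.sqrt (b - x))^-1).
Proof.
apply: meas_oo_cc => x; rewrite in_itv /= => /andP[_ xb]; exact: cont_f.
Qed.

Lemma int_sing (a b : R) : a <= b ->
  (\int[mu]_(x in `[a, b[) ((Num.sqrt (b - x))^-1)%:E <= (2 * Num.sqrt (b - a))%:E)%E.
Proof.
rewrite le_eqVlt => /predU1P[<-|ab].
  by rewrite set_itvco0 integral_set0 lee_fin mulr_ge0 // sqrtr_ge0.
pose F n := `[a, b - (b - a) / (n.+2)%:R]%classic.
have hba : 0 < b - a by rewrite subr_gt0.
have Fab n : a < b - (b - a) / (n.+2)%:R < b.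
  apply/andP; split; last by rewrite ltrBlDr ltrDl divr_gt0.
  rewrite ltrBrDl -ltrBrDr ltr_pdivrMr // ltr_pMr // ltr1n //.
have FE : `[a, b[%classic = \bigcup_n F n.
  apply/seteqP; split => x /=.
    rewrite in_itv /= => /andP[ax xb].
    exists (Num.truncn ((b - a) / (b - x))) => //=.
    rewrite /F /= in_itv /= ax /= lerBrDl -lerBrDr ler_pdivrMr //.
    have hbx : 0 < b - x by rewrite subr_gt0.
    rewrite -ler_pdivrMl // mulrC.
    apply: le_trans (ltW (truncnS_gt _)) _.
    by rewrite ler_nat.
  move=> [n _]; rewrite /F /= !in_itv /= => /andP[-> xb] /=.
  by apply: le_lt_trans xb _; case/andP: (Fab n).
have mF n : measurable (F n) by rewrite /F; exact: measurable_itv.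
have ndF : nondecreasing_seq F.
  apply/nondecreasing_seqP => n; rewrite /F; rewrite subsetEset; apply: subset_itvl.
  rewrite bnd_simp lerD2l lerN2 ler_pM2l // lef_pV2 ?posrE ?ltr0n //.
  by rewrite ler_nat.
have mf n : measurable_fun (F n) (fun x => ((Num.sqrt (b - x))^-1)%:E).
  apply/measurable_EFinP; apply: (measurable_funS (E := `[a, b]%classic)) => //; last exact: meas_phi.
  rewrite /F; apply: subset_itvl.
  by rewrite bnd_simp; case/andP: (Fab n) => _ /ltW.
have f0 n x : F n x -> (0 <= ((Num.sqrt (b - x))^-1)%:E)%E.
  by move=> _; rewrite lee_fin invr_ge0 sqrtr_ge0.
have hc : (\int[mu]_(x in F i) ((Num.sqrt (b - x))^-1)%:E)%E @[i --> \oo] -->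
  (\int[mu]_(x in \bigcup_i F i) ((Num.sqrt (b - x))^-1)%:E)%E.
  apply: ge0_nondecreasing_set_cvg_integral => //.
rewrite FE -(cvg_lim _ hc) //.
apply: lime_le; first by apply/cvg_ex; eexists; exact: hc.
apply: nearW => n.
rewrite /F int_isqrt //; last by case/andP: (Fab n).
  rewrite lee_fin lerBlDr lerDl mulr_ge0 // sqrtr_ge0.
by case/andP: (Fab n).
Qed.
End S.
Set Implicit Arguments. Unset Strict Implicit. Unset Printing Implicit Defensive.
Import Order.TTheory GRing.Theory Num.Theory.
Import numFieldNormedType.Exports.
Local Open Scope classical_set_scope.
Local Open Scope ring_scope.
Section S.
Context {R : realType}.
Notation mu := (@lebesgue_measure R).

Lemma phi_int (a b : R) : a <= b ->
  mu.-integrable `[a, b] (EFin \o (fun x => (Num.sqrt (b - x))^-1)).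
Proof.
move=> ab; apply/integrableP; split; first by apply/measurable_EFinP; exact: meas_phi.
have -> : (\int[mu]_(x in `[a, b]) `|(EFin \o (fun x0 : R => (Num.sqrt (b - x0))^-1)%R) x| =
   \int[mu]_(x in `[a, b]) ((Num.sqrt (b - x))^-1)%:E)%E.
  by apply: eq_integral => x _; rewrite /= ger0_norm // invr_ge0 sqrtr_ge0.
rewrite -integral_itv_bndo_bndc; last first.
  apply/measurable_EFinP; apply: (measurable_funS (E := `[a, b]%classic)) => //; last exact: meas_phi.
  by apply: subset_itvl; rewrite bnd_simp.
exact: le_lt_trans (int_sing ab) (ltry _).
Qed.

Lemma phi_Rint (a b : R) : a <= b ->
  \int[mu]_(x in `[a, b[) (Num.sqrt (b - x))^-1 <= 2 * Num.sqrt (b - a).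
Proof.
move=> ab; rewrite /Rintegral.
have h := int_sing ab.
have h0 : (0 <= \int[mu]_(x in `[a, b[) ((Num.sqrt (b - x))^-1)%:E)%E.
  by apply: integral_ge0 => x _; rewrite lee_fin invr_ge0 sqrtr_ge0.
rewrite -lee_fin fineK //; rewrite ge0_fin_numE //; exact: le_lt_trans h (ltry _).
Qed.

Lemma exp_lip (x y : R) : 0 <= x -> 0 <= y -> `|expR (- x) - expR (- y)| <= `|x - y|.
Proof.
wlog xy : x y / x <= y.
  move=> H x0 y0; have [/H|/ltW yx] := leP x y; first exact.
  by rewrite distrC [`|x - y|]distrC; apply: H.
move=> x0 y0.
have h1 : expR (- y) <= expR (- x) by rewrite ler_expR lerN2.
rewrite ger0_norm ?subr_ge0 // ler0_norm ?subr_le0 // opprB.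
have : expR (- y) = expR (- x) * expR (- (y - x)) by rewrite -expRD; congr expR; ring.
move=> ->.
have h2 := expR_ge1Dx (- (y - x)).
have h3 : expR (- x) <= 1 by rewrite expR_le1 oppr_le0.
have h4 := expR_gt0 (- x).
have h5 : 0 <= y - x by rewrite subr_ge0.
have h6 := expR_gt0 (- (y - x)).
have h7 : expR (- (y - x)) <= 1 by rewrite expR_le1 oppr_le0.
nra.
Qed.

Lemma abs_est (D D' E E' q q' M a b : R) :
  `|D| <= M -> `|D'| <= M -> 0 <= E <= 1 -> 0 <= E' <= 1 -> 0 <= q' <= q ->
  `|D' - D| <= a -> `|E' - E| <= b ->
  `|D' * (E' * q') - D * (E * q)| <= M * (q - q') + (a + M * b) * q.
Proof.
move=> hD hD' /andP[E0 E1] /andP[E'0 E'1] /andP[q'0 q'q] ha hb.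
have -> : D' * (E' * q') - D * (E * q) =
  D' * E' * (q' - q) + ((D' - D) * E' + D * (E' - E)) * q by ring.
have q0 : 0 <= q by exact: le_trans q'q.
apply: le_trans (ler_normD _ _) _.
apply: lerD.
  rewrite normrM [`|q' - q|]ler0_norm ?subr_le0 // opprB.
  apply: ler_wpM2r; first by rewrite subr_ge0.
  rewrite normrM (ger0_norm E'0); rewrite -[M]mulr1; apply: ler_pM => //.
rewrite normrM (ger0_norm q0); apply: ler_wpM2r => //.
apply: le_trans (ler_normD _ _) _; apply: lerD.
  rewrite normrM (ger0_norm E'0) -[a]mulr1; apply: ler_pM => //.
rewrite normrM; apply: ler_pM => //.
Qed.
End S.
Set Implicit Arguments. Unset Strict Implicit. Unset Printing Implicit Defensive.
Import Order.TTheory GRing.Theory Num.Theory.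
Import numFieldNormedType.Exports.
Local Open Scope classical_set_scope.
Local Open Scope ring_scope.
Section X.
Context {R : realType}.
Variables (T Cb beta M : R) (xi dxi : R -> R).
Hypothesis hT : 0 < T.
Hypothesis hb : 2^-1 <= beta.
Hypothesis hder : forall x, 0 < x < T -> is_derive x 1 xi (dxi x).
Hypothesis hcont : {within `[0, T], continuous xi}.
Hypothesis hhol : forall x y, 0 <= x <= T -> 0 <= y <= T ->
  `|dxi x - dxi y| <= Cb * (`|x - y| `^ beta).
Hypothesis hM : forall x, 0 <= x <= T -> `|dxi x| <= M.

Definition DD t s := (xi t - xi s) / (t - s).

Lemma mvtD s t : 0 <= s -> s < t -> t <= T -> exists2 c, s < c < t & DD t s = dxi c.
Proof.
move=> s0 st tT.
have [c cst E] : exists2 c, c \in `]s, t[ & xi t - xi s = dxi c * (t - s).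
  apply: MVT => //.
    move=> x; rewrite in_itv /= => /andP[sx xt]; apply: hder.
    by rewrite (le_lt_trans s0 sx) (lt_le_trans xt tT).
  apply: (continuous_subspaceW _ hcont) => x /=; rewrite !in_itv /= => /andP[sx xt].
  by rewrite (le_trans s0 sx) (le_trans xt tT).
exists c; first by move: cst; rewrite in_itv.
by rewrite /DD E mulfK // subr_eq0 gt_eqF.
Qed.

Lemma Dbound s t : 0 <= s -> s < t -> t <= T -> `|DD t s| <= M.
Proof.
move=> s0 st tT; have [c /andP[sc ct] ->] := mvtD s0 st tT.
apply: hM; rewrite (ltW (le_lt_trans s0 sc)) ltW //; exact: lt_le_trans ct tT.
Qed.

Lemma Ddiff s t t' : 0 <= s -> s < t -> t < t' -> t' <= T ->
  `|DD t' s - DD t s| <= `|Cb| * T `^ (beta - 2^-1) * Num.sqrt (t' - t).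
Proof.
move=> s0 st tt' t'T.
have tT : t <= T by exact: ltW (lt_le_trans tt' t'T).
have st' : s < t' by exact: lt_trans st tt'.
have u0 : 0 < t' - s by rewrite subr_gt0.
have h0 : 0 < t' - t by rewrite subr_gt0.
have -> : DD t' s - DD t s = (t' - t) / (t' - s) * (DD t' t - DD t s).
  rewrite /DD; field.
  by rewrite !subr_eq0 !gt_eqF.
have [c1 /andP[tc1 c1t'] ->] := mvtD (le_trans s0 (ltW st)) tt' t'T.
have [c2 /andP[sc2 c2t] ->] := mvtD s0 st tT.
have hc : `|dxi c1 - dxi c2| <= `|Cb| * (t' - s) `^ beta.
  apply: le_trans (hhol _ _) _.
  - by rewrite !ltW // ?(lt_le_trans c1t' t'T) // (le_lt_trans s0) // (lt_trans st).
  - by rewrite !ltW // ?(lt_le_trans c2t tT) // (le_lt_trans s0).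
  apply: le_trans (ler_wpM2r (powR_ge0 _ _) (ler_norm Cb)) _.
  apply: ler_wpM2l => //.
  apply: ge0_ler_powR; rewrite ?nnegrE //; first exact: le_trans hb.
  - exact: ltW.
  - rewrite ger0_norm; lra.
have hu : t' - t <= t' - s by lra.
rewrite normrM ger0_norm; last by rewrite divr_ge0 // ltW.
apply: le_trans (ler_wpM2l _ hc) _; first by rewrite divr_ge0 // ltW.
have hb' : 0 <= beta - 2^-1 by rewrite subr_ge0.
rewrite (_ : (t' - s) `^ beta = (t' - s) `^ (beta - 2^-1) * (t' - s) `^ 2^-1); last first.
  by rewrite -powRD ?subrK // (gt_eqF u0) implybT.
rewrite powR12_sqrt; last exact: ltW.
have hp : (t' - s) `^ (beta - 2^-1) <= T `^ (beta - 2^-1).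
  apply: ge0_ler_powR => //; rewrite ?nnegrE; lra.
have p0 := powR_ge0 (t' - s) (beta - 2^-1).
set p := (t' - s) `^ _ in hp p0 *.
set P := T `^ _ in hp *.
have w0 : 0 < Num.sqrt (t' - s) by rewrite sqrtr_gt0.
have a0 : 0 < Num.sqrt (t' - t) by rewrite sqrtr_gt0.
have aw : Num.sqrt (t' - t) <= Num.sqrt (t' - s) by rewrite ler_sqrt //; lra.
rewrite -{1}(sqr_sqrtr (ltW h0)) -{1}(sqr_sqrtr (ltW u0)).
set a := Num.sqrt (t' - t) in a0 aw *.
set w := Num.sqrt (t' - s) in w0 aw *.
have -> : a ^+ 2 / w ^+ 2 * (`|Cb| * (p * w)) = `|Cb| * p * a * (a / w).
  by field; rewrite gt_eqF.
have aw1 : a / w <= 1 by rewrite ler_pdivrMr // mul1r.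
have aw0 : 0 <= a / w by rewrite divr_ge0 // ltW.
have C0 : 0 <= `|Cb| by [].
have hP : 0 <= P by exact: le_trans hp.
have e1 : `|Cb| * p <= `|Cb| * P by exact: ler_wpM2l.
have e2 : 0 <= `|Cb| * p by exact: mulr_ge0.
apply: (@le_trans _ _ (`|Cb| * p * a)).
  rewrite -[X in _ <= X]mulr1; apply: ler_wpM2l => //; exact: mulr_ge0 e2 (ltW a0).
by apply: ler_wpM2r => //; exact: ltW.
Qed.

Definition EE t s := expR (- ((xi t - xi s) ^+ 2 / (4 * (t - s)))).

Lemma kernelKE t s : kernelK xi t s = DD t s * (EE t s * (Num.sqrt (t - s))^-1).
Proof. by []. Qed.

Lemma EE01 t s : s < t -> 0 <= EE t s <= 1.
Proof.
move=> st; rewrite expR_ge0 /= expR_le1 oppr_le0 divr_ge0 ?sqr_ge0 //.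
by rewrite mulr_ge0 // subr_ge0 ltW.
Qed.

Lemma EEx t s : s < t -> (xi t - xi s) ^+ 2 / (4 * (t - s)) = DD t s ^+ 2 * (t - s) / 4.
Proof.
move=> st; rewrite /DD; field; by rewrite subr_eq0 gt_eqF.
Qed.

Lemma Kbound s t : 0 <= s -> s < t -> t <= T ->
  `|kernelK xi t s| <= M * (Num.sqrt (t - s))^-1.
Proof.
move=> s0 st tT; rewrite kernelKE normrM.
have /andP[E0 E1] := EE01 st.
have q0 : 0 <= (Num.sqrt (t - s))^-1 by rewrite invr_ge0 sqrtr_ge0.
apply: ler_pM => //; first exact: Dbound.
rewrite normrM (ger0_norm E0) (ger0_norm q0) -[X in _ <= X]mul1r.
exact: ler_wpM2r.
Qed.

Lemma xdiff (D D' u h a : R) : `|D| <= M -> `|D'| <= M -> 0 <= u -> 0 <= h -> u + h <= T ->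
  `|D' - D| <= a ->
  `|D' ^+ 2 * (u + h) / 4 - D ^+ 2 * u / 4| <= M * T * a + M ^+ 2 * h.
Proof.
move=> hD hD' u0 h0 uT ha.
have M0 : 0 <= M by exact: le_trans (normr_ge0 _) hD.
have -> : D' ^+ 2 * (u + h) / 4 - D ^+ 2 * u / 4 =
  ((D' - D) * (D' + D) * (u + h) + D ^+ 2 * h) / 4 by field.
rewrite normrM (@ger0_norm _ 4^-1); last by rewrite invr_ge0.
have hs : `|(D' - D) * (D' + D) * (u + h) + D ^+ 2 * h| <= 2 * (M * T * a + M ^+ 2 * h).
  apply: le_trans (ler_normD _ _) _.
  rewrite [2 * (_ + _)]mulrDr; apply: lerD.
    rewrite !normrM (ger0_norm (addr_ge0 u0 h0)).
    have a0 : 0 <= a by exact: le_trans (normr_ge0 _) ha.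
    have hDD : `|D' + D| <= 2 * M by apply: le_trans (ler_normD _ _) _; lra.
    have : `|D' - D| * `|D' + D| <= a * (2 * M) by apply: ler_pM.
    move=> hx; apply: le_trans (ler_pM _ _ hx uT) _ => //.
      exact: addr_ge0.
    by have -> : a * (2 * M) * T = 2 * (M * T * a) by ring.
  rewrite normrM (ger0_norm h0) (ger0_norm (sqr_ge0 D)).
  have : D ^+ 2 <= M ^+ 2 by rewrite -(real_normK (num_real D)) lerXn2r // nnegrE.
  move=> hx; apply: le_trans (ler_wpM2r h0 hx) _.
  have : 0 <= M ^+ 2 * h by exact: mulr_ge0 (exprn_ge0 _ M0) h0.
  lra.
have n0 := normr_ge0 ((D' - D) * (D' + D) * (u + h) + D ^+ 2 * h).
lra.
Qed.

Definition AA := `|Cb| * T `^ (beta - 2^-1).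
Definition LL := AA + M * (M * T * AA + M ^+ 2 * Num.sqrt T).

Lemma Kdiff s t t' : 0 <= s -> s < t -> t < t' -> t' <= T ->
  `|kernelK xi t' s - kernelK xi t s| <=
  M * ((Num.sqrt (t - s))^-1 - (Num.sqrt (t' - s))^-1) +
  LL * Num.sqrt (t' - t) * (Num.sqrt (t - s))^-1.
Proof.
move=> s0 st tt' t'T.
have tT : t <= T by exact: ltW (lt_le_trans tt' t'T).
have st' : s < t' by exact: lt_trans st tt'.
have dD := Ddiff s0 st tt' t'T.
have hD := Dbound s0 st tT.
have hD' := Dbound s0 st' t'T.
have h0 : 0 <= t' - t by rewrite subr_ge0 ltW.
have hT' : Num.sqrt (t' - t) <= Num.sqrt T by rewrite ler_sqrt //; lra.
have hh : t' - t <= Num.sqrt T * Num.sqrt (t' - t).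
  rewrite -{1}(sqr_sqrtr h0) expr2; apply: ler_wpM2r => //; exact: sqrtr_ge0.
have dE : `|EE t' s - EE t s| <= M * T * (AA * Num.sqrt (t' - t)) +
                                 M ^+ 2 * (Num.sqrt T * Num.sqrt (t' - t)).
  rewrite /EE; apply: le_trans (exp_lip _ _) _.
  - by rewrite divr_ge0 ?sqr_ge0 // mulr_ge0 // subr_ge0 ltW.
  - by rewrite divr_ge0 ?sqr_ge0 // mulr_ge0 // subr_ge0 ltW.
  rewrite !EEx //.
  rewrite (_ : t' - s = (t - s) + (t' - t)); last by ring.
  apply: le_trans (xdiff hD hD' _ h0 _ dD) _.
  - by rewrite subr_ge0 ltW.
  - by rewrite (_ : t - s + (t' - t) = t' - s); [lra | ring].
  apply: lerD => //; apply: ler_wpM2l => //.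
  by apply: exprn_ge0; exact: le_trans (normr_ge0 _) hD.
rewrite !kernelKE.
have q1 : (Num.sqrt (t' - s))^-1 <= (Num.sqrt (t - s))^-1.
  rewrite lef_pV2 ?posrE ?sqrtr_gt0 ?subr_gt0 //.
  by rewrite ler_sqrt ?subr_gt0 //; lra.
have q0 : 0 <= (Num.sqrt (t' - s))^-1 by rewrite invr_ge0 sqrtr_ge0.
apply: le_trans (abs_est hD hD' (EE01 st) (EE01 st') _ dD dE) _.
  by rewrite q0 q1.
rewrite /LL.
suff -> : M * ((Num.sqrt (t - s))^-1 - (Num.sqrt (t' - s))^-1) +
  (AA * Num.sqrt (t' - t) + M * (M * T * (AA * Num.sqrt (t' - t)) +
     M ^+ 2 * (Num.sqrt T * Num.sqrt (t' - t)))) * (Num.sqrt (t - s))^-1 =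
  M * ((Num.sqrt (t - s))^-1 - (Num.sqrt (t' - s))^-1) +
  (AA + M * (M * T * AA + M ^+ 2 * Num.sqrt T)) * Num.sqrt (t' - t) *
  (Num.sqrt (t - s))^-1 by [].
ring.
Qed.
End X.
Set Implicit Arguments. Unset Strict Implicit. Unset Printing Implicit Defensive.
Import Order.TTheory GRing.Theory Num.Theory.
Import numFieldNormedType.Exports.
Local Open Scope classical_set_scope.
Local Open Scope ring_scope.
Section Y.
Context {R : realType}.

Lemma hol_cont (T C : R) (f : R -> R) x :
  (forall x y : R, 0 <= x <= T -> 0 <= y <= T -> `|f x - f y| <= C * (`|x - y| `^ (1 / 2))) ->
  0 < x < T -> {for x, continuous f}.
Proof.
move=> hf /andP[x0 xT].
apply/cvgrPdist_le => /= e e0.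
pose c := e / (`|C| + 1).
have c0 : 0 < c by rewrite divr_gt0 // ltr_wpDl.
pose d := Num.min (Num.min x (T - x)) (c ^+ 2).
have d0 : 0 < d by rewrite !lt_min x0 subr_gt0 xT exprn_gt0.
apply/nbhs_ballP; exists d => //= y; rewrite /ball /= => hxy.
have hxy1 : `|x - y| < x by apply: lt_le_trans hxy _; rewrite /d !ge_min lexx.
have hxy2 : `|x - y| < T - x by apply: lt_le_trans hxy _; rewrite /d !ge_min lexx orbT.
have hxy3 : `|x - y| < c ^+ 2 by apply: lt_le_trans hxy _; rewrite /d !ge_min lexx orbT.
have yb : 0 <= y <= T.
  move: hxy1 hxy2; rewrite !ltr_norml => /andP[h1 h2] /andP[h3 h4].
  apply/andP; split; lra.
apply: le_trans (hf x y _ yb) _; first by rewrite !ltW.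
rewrite div1r powR12_sqrt //.
have hs : Num.sqrt `|x - y| <= c.
  rewrite -[X in _ <= X](ger0_norm (ltW c0)) -(sqrtr_sqr c) ler_sqrt ?ltW // ?exprn_ge0 // ?ltW.
  exact: exprn_gt0.
apply: le_trans (ler_wpM2r (sqrtr_ge0 _) (ler_norm C)) _.
apply: le_trans (ler_wpM2l (normr_ge0 _) hs) _.
rewrite /c mulrA ler_pdivrMr ?ltr_wpDl //.
rewrite mulrC ler_wpM2l ?ltW //; lra.
Qed.

Lemma K_cont (xi : R -> R) tau s : s < tau -> {for s, continuous xi} ->
  {for s, continuous (fun y => kernelK xi tau y)}.
Proof.
move=> st cxi.
have c1 : {for s, continuous (fun y => xi tau - xi y)}.
  by apply: continuousB => //; exact: cst_continuous.
have c2 : {for s, continuous (fun y : R => tau - y)}.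
  by apply: continuousB; [exact: cst_continuous | exact: cvg_id].
have n2 : tau - s != 0 by rewrite subr_eq0 gt_eqF.
have c3 : {for s, continuous (fun y : R => Num.sqrt (tau - y))}.
  apply: (@continuous_comp _ _ _ (fun y : R => tau - y) Num.sqrt) => //.
  exact: sqrt_continuous.
have n3 : Num.sqrt (tau - s) != 0 by rewrite gt_eqF // sqrtr_gt0 subr_gt0.
rewrite /kernelK.
apply: continuousM.
  apply: continuousM => //; exact: continuousV.
apply: continuousM; last exact: continuousV.
apply: (@continuous_comp _ _ _ (fun y => - ((xi tau - xi y) ^+ 2 / (4 * (tau - y)))) expR).
  apply: continuousN; apply: continuousM.
    exact: continuousM.
  apply: continuousV; first by rewrite mulf_neq0.
  apply: continuousM => //; exact: cst_continuous.
exact: continuous_expR.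
Qed.
End Y.
Set Implicit Arguments. Unset Strict Implicit. Unset Printing Implicit Defensive.
Import Order.TTheory GRing.Theory Num.Theory.
Import numFieldNormedType.Exports.
Local Open Scope classical_set_scope.
Local Open Scope ring_scope.
Section Z.
Context {R : realType}.
Notation mu := (@lebesgue_measure R).
Variables (T Cb beta M F0 : R) (xi dxi f : R -> R).
Hypothesis hT : 0 < T.
Hypothesis hb : 2^-1 <= beta.
Hypothesis hder : forall x, 0 < x < T -> is_derive x 1 xi (dxi x).
Hypothesis hcont : {within `[0, T], continuous xi}.
Hypothesis hhol : forall x y, 0 <= x <= T -> 0 <= y <= T ->
  `|dxi x - dxi y| <= Cb * (`|x - y| `^ beta).
Hypothesis hM : forall x, 0 <= x <= T -> `|dxi x| <= M.
Hypothesis hF : forall x, 0 <= x <= T -> `|f x| <= F0.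
Hypothesis hfc : forall x, 0 < x < T -> {for x, continuous f}.

Lemma intZ (i : interval R) (g : R -> R) (k : R) :
  mu.-integrable [set` i] (EFin \o g) -> mu.-integrable [set` i] (EFin \o (fun x => k * g x)).
Proof.
move=> h; by apply: (eq_integrable _ _ _ _ (integrableZl _ k h)) => //.
Qed.

Lemma intB (i : interval R) (g1 g2 : R -> R) :
  mu.-integrable [set` i] (EFin \o g1) -> mu.-integrable [set` i] (EFin \o g2) ->
  mu.-integrable [set` i] (EFin \o (fun x => g1 x - g2 x)).
Proof.
move=> h1 h2; by apply: (eq_integrable _ _ _ _ (integrableB _ h1 h2)) => //.
Qed.

Let phi (c x : R) := (Num.sqrt (c - x))^-1.

Lemma M0 : 0 <= M.
Proof. have h : 0 <= (0:R) <= T by rewrite lexx ltW. exact: le_trans (normr_ge0 _) (hM h). Qed.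

Lemma F00 : 0 <= F0.
Proof. have h : 0 <= (0:R) <= T by rewrite lexx ltW. exact: le_trans (normr_ge0 _) (hF h). Qed.

Lemma kpt tau s : 0 <= s <= tau -> tau <= T ->
  `|kernelK xi tau s * f s| <= M * F0 * phi tau s.
Proof.
move=> /andP[s0]; rewrite le_eqVlt => /predU1P[<-|st] tT.
  rewrite /kernelK subrr !mul0r normr0 /phi subrr sqrtr0 invr0 mulr0 //.
rewrite normrM mulrAC; apply: ler_pM => //.
  by apply: (Kbound hder hcont hM) => //.
by apply: hF; rewrite s0 (le_trans (ltW st)).
Qed.

Lemma xi_cont x : 0 < x < T -> {for x, continuous xi}.
Proof.
move=> /hder [d _]; apply: differentiable_continuous; exact/derivable1_diffP.
Qed.

Lemma measK tau : tau <= T -> measurable_fun `[0, tau] (fun s => kernelK xi tau s * f s).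
Proof.
move=> tT; apply: meas_oo_cc => s; rewrite in_itv /= => /andP[s0 st].
have sT : 0 < s < T by rewrite s0 (lt_le_trans st tT).
apply: continuousM; first by apply: K_cont => //; exact: xi_cont.
exact: hfc.
Qed.

Lemma intK tau : 0 <= tau -> tau <= T ->
  mu.-integrable `[0, tau] (EFin \o (fun s => kernelK xi tau s * f s)).
Proof.
move=> t0 tT.
have hg : mu.-integrable `[0, tau] (fun x => ((M * F0)%:E * (EFin \o phi tau) x)%E).
  by apply: integrableZl => //; exact: phi_int.
apply: (le_integrable _ _ _ hg).
- exact: measurable_itv.
- by apply/measurable_EFinP; exact: measK.
- move=> s; rewrite /= in_itv /= => hs.
  rewrite lee_fin.
  apply: le_trans (kpt hs tT) _; exact: ler_norm.
Qed.

Lemma phi_intS a c (i : interval R) : a <= c -> [set` i] `<=` `[a, c] ->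
  mu.-integrable [set` i] (EFin \o phi c).
Proof.
move=> ac Dsub. have := phi_int ac. apply: integrableS => //. Qed.

Lemma phi_Rint_eq a b c : a <= b -> b < c ->
  \int[mu]_(x in `[a, b[) phi c x = 2 * Num.sqrt (c - a) - 2 * Num.sqrt (c - b).
Proof.
rewrite le_eqVlt => /predU1P[<- _|ab bc]; first by rewrite set_itvco0 Rintegral_set0 subrr.
have ac : a <= c by exact: ltW (lt_trans ab bc).
rewrite Rintegral_itv_bndo_bndc; last first.
  apply: (@phi_intS a) => //; apply: subset_itvl; rewrite bnd_simp; exact: ltW.
by rewrite /Rintegral /phi int_isqrt.
Qed.

Let kk tau s := kernelK xi tau s * f s.

Lemma intKS tau (i : interval R) : 0 <= tau -> tau <= T -> [set` i] `<=` `[0, tau] ->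
  mu.-integrable [set` i] (EFin \o kk tau).
Proof.
move=> t0 tT Dsub; have := intK t0 tT; exact: integrableS.
Qed.

Lemma gdiff t t' : 0 <= t -> t < t' -> t' <= T ->
  `|gfun xi f t' - gfun xi f t| <=
  (4 * F0 * M + 2 * F0 * LL T Cb beta M * Num.sqrt T) * Num.sqrt (t' - t).
Proof.
move=> t0 tt' t'T.
have tT : t <= T by exact: ltW (lt_le_trans tt' t'T).
have t'0 : 0 <= t' by exact: le_trans t0 (ltW tt').
have i' : mu.-integrable `[0, t'] (EFin \o kk t') by exact: intK.
have i'0 : mu.-integrable `[0, t] (EFin \o kk t').
  apply: intKS => //; apply: subset_itvl; rewrite bnd_simp; exact: ltW.
have i0 : mu.-integrable `[0, t] (EFin \o kk t) by exact: intK.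
have i1 : mu.-integrable `[0, t[ (EFin \o (fun s => kk t' s - kk t s)).
  apply: (integrableS _ _ _ (intB i'0 i0)) => //.
  by apply: subset_itvl; rewrite bnd_simp.
have e1 : gfun xi f t' - gfun xi f t =
    \int[mu]_(s in `]t, t']) kk t' s + \int[mu]_(s in `[0, t[) (kk t' s - kk t s).
  rewrite /gfun.
  change (\int[mu]_(s in `[0, t']) kk t' s - \int[mu]_(s in `[0, t]) kk t s =
    \int[mu]_(s in `]t, t']) kk t' s + \int[mu]_(s in `[0, t[) (kk t' s - kk t s)).
  rewrite Rintegral_itv_bndo_bndc // RintegralB //.
  rewrite -(@Rintegral_itvB _ (kk t') (BLeft 0) (BRight t') t i'); last 2 first.
  - by rewrite bnd_simp.
  - by rewrite bnd_simp ltW.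
  ring.
rewrite e1; apply: le_trans (ler_normD _ _) _.
have M0' := M0; have F0' := F00.
have LL0 : 0 <= LL T Cb beta M.
  rewrite /LL /AA; apply: addr_ge0; first exact: mulr_ge0 (normr_ge0 _) (powR_ge0 _ _).
  apply: mulr_ge0 => //; apply: addr_ge0; last exact: mulr_ge0 (exprn_ge0 _ M0') (sqrtr_ge0 _).
  by apply: mulr_ge0 (mulr_ge0 M0' (ltW hT)) (mulr_ge0 (normr_ge0 _) (powR_ge0 _ _)).
have sh0 := sqrtr_ge0 (t' - t).
have bA : `|\int[mu]_(s in `]t, t']) kk t' s| <= M * F0 * (2 * Num.sqrt (t' - t)).
  have iA : mu.-integrable `]t, t'] (EFin \o kk t').
    apply: intKS => //; apply: subset_itvr; rewrite bnd_simp //.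
  apply: le_trans (le_normr_Rintegral _ iA) _ => //.
  have iphi : mu.-integrable `]t, t'] (EFin \o phi t').
    apply: (@phi_intS t); first exact: ltW; apply: subset_itvr; rewrite bnd_simp //.
  have iB : mu.-integrable `]t, t'] (EFin \o (fun s => M * F0 * phi t' s)).
    exact: intZ.
  apply: le_trans (le_Rintegral _ (integrable_norm iA) iB _) _ => //.
    move=> s; rewrite /= in_itv /= => /andP[ts st']; apply: kpt => //.
    by rewrite st' (le_trans t0 (ltW ts)).
  rewrite RintegralZl //; apply: ler_wpM2l; first exact: mulr_ge0.
  rewrite Rintegral_itv_obnd_cbnd // -Rintegral_itv_bndo_bndc; first exact: phi_Rint (ltW tt').
  apply: (@phi_intS t); [exact: ltW | apply: subset_itvl; rewrite bnd_simp //].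
have bB : `|\int[mu]_(s in `[0, t[) (kk t' s - kk t s)| <=
    2 * F0 * M * Num.sqrt (t' - t) + 2 * F0 * LL T Cb beta M * Num.sqrt T * Num.sqrt (t' - t).
  apply: le_trans (le_normr_Rintegral _ i1) _ => //.
  have ip : mu.-integrable `[0, t[ (EFin \o phi t).
    apply: (@phi_intS 0) => //; apply: subset_itvl; rewrite bnd_simp //.
  have ip' : mu.-integrable `[0, t[ (EFin \o phi t').
    apply: (@phi_intS 0) => //; apply: subset_itvl; rewrite bnd_simp //; exact: ltW.
  pose c1 := F0 * M + F0 * LL T Cb beta M * Num.sqrt (t' - t).
  pose c2 := F0 * M.
  have iG1 : mu.-integrable `[0, t[ (EFin \o (fun s => c1 * phi t s)) by exact: intZ.
  have iG2 : mu.-integrable `[0, t[ (EFin \o (fun s => c2 * phi t' s)) by exact: intZ.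
  have iG : mu.-integrable `[0, t[ (EFin \o (fun s => c1 * phi t s - c2 * phi t' s)).
    exact: intB.
  apply: le_trans (le_Rintegral _ (integrable_norm i1) iG _) _ => //.
    move=> s; rewrite /= in_itv /= => /andP[s0 st].
    have -> : kk t' s - kk t s = (kernelK xi t' s - kernelK xi t s) * f s by rewrite /kk mulrBl.
    rewrite normrM.
    have hs : 0 <= s <= T by rewrite s0 (le_trans (ltW st) tT).
    apply: le_trans (ler_pM (normr_ge0 _) (normr_ge0 _) (Kdiff hb hder hcont hhol hM s0 st tt' t'T) (hF hs)) _.
    rewrite /c1 /c2 /phi.
    have -> : (M * ((Num.sqrt (t - s))^-1 - (Num.sqrt (t' - s))^-1) +
       LL T Cb beta M * Num.sqrt (t' - t) / Num.sqrt (t - s)) * F0 =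
      (F0 * M + F0 * LL T Cb beta M * Num.sqrt (t' - t)) * (Num.sqrt (t - s))^-1 -
      F0 * M * (Num.sqrt (t' - s))^-1 by ring.
    by [].
  rewrite RintegralB // RintegralZl // RintegralZl //.
  rewrite (@phi_Rint_eq 0 t t' t0 tt') ?subr0.
  have p1 := phi_Rint t0; rewrite subr0 in p1.
  have c10 : 0 <= c1 by rewrite /c1; apply: addr_ge0; [exact: mulr_ge0 | exact: mulr_ge0 (mulr_ge0 F0' LL0) sh0].
  apply: le_trans (lerB (ler_wpM2l c10 p1) (lexx _)) _.
  have st1 : Num.sqrt t <= Num.sqrt t' by rewrite ler_sqrt //; exact: ltW.
  have st2 : Num.sqrt t <= Num.sqrt T by rewrite ler_sqrt // ltW.
  have f1 : F0 * M * Num.sqrt t <= F0 * M * Num.sqrt t' by apply: ler_wpM2l => //; exact: mulr_ge0.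
  have f2 : F0 * LL T Cb beta M * Num.sqrt (t' - t) * Num.sqrt t <=
            F0 * LL T Cb beta M * Num.sqrt (t' - t) * Num.sqrt T.
    by apply: ler_wpM2l => //; exact: mulr_ge0 (mulr_ge0 F0' LL0) sh0.
  rewrite /c1 /c2; nra.
have -> : (4 * F0 * M + 2 * F0 * LL T Cb beta M * Num.sqrt T) * Num.sqrt (t' - t) =
  M * F0 * (2 * Num.sqrt (t' - t)) +
  (2 * F0 * M * Num.sqrt (t' - t) + 2 * F0 * LL T Cb beta M * Num.sqrt T * Num.sqrt (t' - t)) by ring.
exact: lerD bA bB.
Qed.
End Z.
Set Implicit Arguments. Unset Strict Implicit. Unset Printing Implicit Defensive.
Import Order.TTheory GRing.Theory Num.Theory.
Import numFieldNormedType.Exports.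
Local Open Scope classical_set_scope.
Local Open Scope ring_scope.

Lemma bound_of_holder (R : realType) (T a C : R) (g : R -> R) : 0 < T -> 0 <= a ->
  (forall x y : R, 0 <= x <= T -> 0 <= y <= T -> `|g x - g y| <= C * (`|x - y| `^ a)) ->
  forall x, 0 <= x <= T -> `|g x| <= `|g 0| + `|C| * T `^ a.
Proof.
move=> hT a0 hg x hx.
have h0 : 0 <= (0:R) <= T by rewrite lexx ltW.
have e : g x = g 0 + (g x - g 0) by ring.
rewrite e; apply: le_trans (ler_normD _ _) _; apply: lerD => //.
apply: le_trans (hg x 0 hx h0) _.
apply: le_trans (ler_wpM2r (powR_ge0 _ _) (ler_norm C)) _.
apply: ler_wpM2l => //; apply: ge0_ler_powR; rewrite ?nnegrE //; first exact: ltW.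
by case/andP: hx => x0 xT; rewrite subr0 ger0_norm.
Qed.

Theorem lemma3p14 (R : realType) (T beta : R) (xi f : R -> R) :
  0 < T -> 1 / 2 < beta -> beta <= 1 ->
  C1beta T beta xi ->
  holder_on 0 T (1 / 2) f ->
  holder_on 0 T (1 / 2) (gfun xi f).
Proof.
move=> hT hb _ [hcont [dxi [hder [Cb hhol]]]] [Cf hf].
have hb' : 2^-1 <= beta by rewrite -div1r ltW.
have b0 : 0 <= beta by apply: le_trans hb'; rewrite invr_ge0.
have hM := bound_of_holder hT b0 hhol.
have hF := bound_of_holder hT _ hf.
have hF' := hF (ltac:(by rewrite div1r invr_ge0)).
have hfc : forall x, 0 < x < T -> {for x, continuous f}.
  by move=> x hx; apply: (hol_cont hf hx).
set M := `|dxi 0| + `|Cb| * T `^ beta in hM.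
set F0 := `|f 0| + `|Cf| * T `^ (1 / 2) in hF'.
exists (4 * F0 * M + 2 * F0 * LL T Cb beta M * Num.sqrt T).
have key := gdiff hT hb' hder hcont hhol hM hF' hfc.
have C0 : 0 <= 4 * F0 * M + 2 * F0 * LL T Cb beta M * Num.sqrt T.
  have M0 : 0 <= M by rewrite /M addr_ge0 // mulr_ge0 // powR_ge0.
  have F00 : 0 <= F0 by rewrite /F0 addr_ge0 // mulr_ge0 // powR_ge0.
  have LL0 : 0 <= LL T Cb beta M.
    rewrite /LL /AA; apply: addr_ge0; first exact: mulr_ge0 (normr_ge0 _) (powR_ge0 _ _).
    apply: mulr_ge0 => //; apply: addr_ge0; last exact: mulr_ge0 (exprn_ge0 _ M0) (sqrtr_ge0 _).
    by apply: mulr_ge0 (mulr_ge0 M0 (ltW hT)) (mulr_ge0 (normr_ge0 _) (powR_ge0 _ _)).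
  apply: addr_ge0; first by rewrite !mulr_ge0.
  by rewrite !mulr_ge0 // sqrtr_ge0.
have w : forall x y, 0 <= x <= T -> 0 <= y <= T -> x <= y ->
  `|gfun xi f x - gfun xi f y| <=
  (4 * F0 * M + 2 * F0 * LL T Cb beta M * Num.sqrt T) * (`|x - y| `^ (1 / 2)).
  move=> x y /andP[x0 xT] /andP[y0 yT]; rewrite le_eqVlt => /predU1P[<-|xy].
    by rewrite !subrr normr0 mulr_ge0 // powR_ge0.
  have hyx : 0 <= y - x by rewrite subr_ge0 ltW.
  rewrite distrC [`|x - y|]distrC (ger0_norm hyx) div1r powR12_sqrt //.
  exact: key.
move=> x y hx hy; have [xy|/ltW yx] := leP x y; first exact: w.
by rewrite distrC [`|x - y|]distrC; exact: w.
Qed.
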